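(* Let $\ell\ge1$, $m\ge0$, positive integers $n_0,\dots,n_m$ with $n:=\sum_{j=0}^m n_j-1\ge1$, and distinct points $z_0=0,z_1,\dots,z_m$ in the open unit disc be given, and let $Z$, $e$ be as below. Let $t_1,\dots,t_\ell$ be positive integers with $t_1+\dots+t_\ell=n\ell$, let $t=\max_i t_i$, and let $V$, $N$ be as below. Then the first $\ell$ rows of the $\ell(n+1)\times\ell n$ matrix $VN$ are zero, so $VN=\begin{bmatrix}0_{\ell\times\ell n}\\ L\end{bmatrix}$ with $L\in\mathbb{C}^{\ell n\times\ell n}$, and $L$ is nonsingular if and only if $t_1=t_2=\dots=t_\ell=n$.
   Context: $Z_j$ is the $n_j\times n_j$ lower bidiagonal matrix with $z_j$ on the diagonal and $1$ on the first subdiagonal, and $Z=\operatorname{diag}(Z_0,\dots,Z_m)\in\mathbb{C}^{(n+1)\times(n+1)}$. $e\in\mathbb{R}^{n+1}$ is the column vector obtained by stacking the vectors $(1,0,\dots,0)'\in\mathbb{R}^{n_j}$, $j=0,\dots,m$. $V=\begin{bmatrix}(Ze)\otimes I_\ell & (Z^2e)\otimes I_\ell&\cdots&(Z^te)\otimes I_\ell\end{bmatrix}\in\mathbb{C}^{\ell(n+1)\times\ell t}$. For $k=1,\dots,t$, $N_k=\operatorname{diag}(e^k_{t_1},\dots,e^k_{t_\ell})\in\mathbb{R}^{\ell\times\ell n}$, where $e^k_{j}\in\mathbb{R}^{1\times j}$ is the row vector whose $k$-th entry is $1$ and other entries $0$ if $k\le j$, and the zero row vector of length $j$ if $k>j$;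 equivalently $\operatorname{diag}(z^{t_1},\dots,z^{t_\ell})\,\operatorname{diag}(\pi_{t_1}(z^{-1}),\dots,\pi_{t_\ell}(z^{-1}))=\sum_{k=1}^t N_k z^k$ with $\pi_\nu(z)=(z^{\nu-1},\dots,z,1)$. $N=\begin{bmatrix}N_1\\ \vdots\\ N_t\end{bmatrix}\in\mathbb{R}^{\ell t\times\ell n}$. $\otimes$ is the Kronecker product. *)

(* Defs.v *)
From HB Require Import structures.
From mathcomp Require Import all_boot all_order all_algebra.
From mathcomp Require Import reals.
From mathcomp Require Export mxtens complex.

Set Implicit Arguments.
Unset Strict Implicit.
Unset Printing Implicit Defensive.

Import GRing.Theory Num.Theory.
Local Open Scope ring_scope.

Section Defs.
Variable C : pzRingType.

Definition Zblk (zj : C) (k : nat) : 'M[C]_k :=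
  \matrix_(i, j) (if (i == j :> nat) then zj
                  else if (i == j.+1 :> nat) then 1 else 0).

Definition Zmat (m : nat) (nj : 'I_m.+1 -> nat) (z : 'I_m.+1 -> C)
  : 'M[C]_(\sum_(j < m.+1) nj j) :=
  \mxdiag_(j < m.+1) Zblk (z j) (nj j).

Definition evec (m : nat) (nj : 'I_m.+1 -> nat)
  : 'cV[C]_(\sum_(j < m.+1) nj j) :=
  \mxcol_(j < m.+1) (\col_(r < nj j) ((r == 0 :> nat)%:R : C)).

Definition Zpow_e (m n : nat) (nj : 'I_m.+1 -> nat) (z : 'I_m.+1 -> C)
  (hn : (\sum_(j < m.+1) nj j)%N = n.+1) (k : nat) : 'cV[C]_(n.+1) :=
  iter k (mulmx (castmx (hn, hn) (Zmat nj z))) (castmx (hn, erefl) (evec nj)).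

Definition Vmat (m n l t : nat) (nj : 'I_m.+1 -> nat) (z : 'I_m.+1 -> C)
  (hn : (\sum_(j < m.+1) nj j)%N = n.+1) :
  'M[C]_(n.+1 * l, \sum_(k < t) (1 * l)) :=
  \mxrow_(k < t) (Zpow_e z hn k.+1 *t (1%:M : 'M[C]_l)).

(* e^k_j : the 1 x j row vector with 1 in position k (1-based), zero if k > j. *)
Definition erow (k j : nat) : 'rV[C]_j := \row_(c < j) ((c.+1 == k)%:R : C).

Lemma sum1_ord (l : nat) : (\sum_(i < l) 1)%N = (1 * l)%N.
Proof. by rewrite sum1_card card_ord mul1n. Qed.

Definition Nk (l n : nat) (ts : 'I_l -> nat)
  (ht : (\sum_(i < l) ts i)%N = (n * l)%N) (k : nat) : 'M[C]_(1 * l, l * n) :=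
  castmx (sum1_ord l, etrans ht (mulnC n l))
    (\mxblock_(i < l, i' < l)
       (if i == i' then erow k (ts i') else (0 : 'M[C]_(1, ts i')))).

Definition Nmat (l n t : nat) (ts : 'I_l -> nat)
  (ht : (\sum_(i < l) ts i)%N = (n * l)%N) : 'M[C]_(\sum_(k < t) (1 * l), l * n) :=
  \mxcol_(k < t) Nk ht k.+1.

Lemma rows_split (n l : nat) : (n.+1 * l = l + l * n)%N.
Proof. by rewrite mulSn mulnC. Qed.

Definition VN (m n l t : nat) (nj : 'I_m.+1 -> nat) (z : 'I_m.+1 -> C)
  (hn : (\sum_(j < m.+1) nj j)%N = n.+1) (ts : 'I_l -> nat)
  (ht : (\sum_(i < l) ts i)%N = (n * l)%N) : 'M[C]_(l + l * n, l * n) :=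
  castmx (rows_split n l, erefl) (Vmat l t z hn *m Nmat t ht).

End Defs.

(* Main.v *)
Require Import Defs.
From HB Require Import structures.
From mathcomp Require Import all_boot all_order all_algebra.
From mathcomp Require Import reals.
From mathcomp Require Import mxtens complex.
Import GRing.Theory Num.Theory.
Local Open Scope ring_scope.

Set Implicit Arguments.
Unset Strict Implicit.
Unset Printing Implicit Defensive.


Section Blk.
Variable F : fieldType.

Lemma sum_delta (N r : nat) (f : nat -> F) : (r < N)%N ->
  \sum_(j < N) (r == j :> nat)%:R * f j = f r.
Proof.
move=> hr; rewrite (bigD1 (Ordinal hr)) //= eqxx mul1r big1 ?addr0 //.
move=> j /eqP hj; case: eqP => [h|]; last by rewrite mul0r.
by exfalso; apply: hj; apply: val_inj.
Qed.

Lemma sum_delta1 (N r : nat) (f : nat -> F) : (r < N)%N ->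
  \sum_(j < N) (r == j.+1 :> nat)%:R * f j = if r is r'.+1 then f r' else 0.
Proof.
case: r => [|r] hr.
  by rewrite big1 // => j _; rewrite mul0r.
have hr' : (r < N)%N by apply: ltnW.
rewrite (bigD1 (Ordinal hr')) //= eqxx mul1r big1 ?addr0 //.
move=> j /eqP hj; case: eqP => [[h]|]; last by rewrite mul0r.
by exfalso; apply: hj; apply: val_inj.
Qed.

Definition e1 (N : nat) : 'cV[F]_N := \col_(r < N) ((r == 0 :> nat)%:R : F).

Lemma Zblk_iter (zj : F) (N k : nat) (r : 'I_N) :
  (iter k (mulmx (Zblk zj N)) (e1 N)) r 0 = 'C(k, r)%:R * zj ^+ (k - r).
Proof.
elim: k r => [|k IH] r /=.
  by rewrite /e1 !mxE; case: r => [[|r'] Hr] /=; rewrite ?mulr1 ?mul0r.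
rewrite mxE.
under eq_bigr => j _ do rewrite IH /Zblk mxE.
have H : forall j : 'I_N, (if r == j :> nat then zj else if r == j.+1 :> nat then 1 else 0)
   = (r == j :> nat)%:R * zj + (r == j.+1 :> nat)%:R.
  move=> j; case: eqP => [->|_]; first by rewrite eqn_leq ltnn andbF mul1r addr0.
  by rewrite mul0r add0r; case: eqP.
under eq_bigr => j _ do rewrite H mulrDl -mulrA.
rewrite big_split /= (sum_delta (fun j => zj * ('C(k, j)%:R * zj ^+ (k - j)))) //.
rewrite (sum_delta1 (fun j => ('C(k, j)%:R * zj ^+ (k - j)))) //.
clear H; case: r => [[|r] Hr] /=.
  by rewrite addr0 !bin0 subn0 mulrCA -exprS.
rewrite binS natrD mulrDl; congr (_ + _).
have [hrk|hkr] := ltnP r k.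
  by rewrite mulrCA -exprS subSS subnSK.
by rewrite bin_small ?ltnS // !mul0r mulr0.
Qed.
End Blk.


Section Zp.
Variable F : fieldType.

Lemma castmx_mulmx_sq (p p' q : nat) (e : p = p') (A : 'M[F]_p) (B : 'M[F]_(p, q)) :
  castmx (e, e) A *m castmx (e, erefl) B = castmx (e, erefl) (A *m B).
Proof. by case: p' / e. Qed.

Lemma iter_mxdiag (m : nat) (nj : 'I_m.+1 -> nat) (z : 'I_m.+1 -> F) k :
  iter k (mulmx (Zmat nj z)) (evec F nj) =
  \mxcol_j iter k (mulmx (Zblk (z j) (nj j))) (e1 F (nj j)).
Proof.
elim: k => [|k IH] //=.
by rewrite IH /Zmat mul_mxdiag_mxcol.
Qed.

Lemma Zpow_eE (m n : nat) (nj : 'I_m.+1 -> nat) (z : 'I_m.+1 -> F)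
  (hn : (\sum_(j < m.+1) nj j)%N = n.+1) k (r : 'I_n.+1) :
  Zpow_e z hn k r 0 =
  let r' := cast_ord (esym hn) r in
  'C(k, tagnat.sig2 r')%:R * z (tagnat.sig1 r') ^+ (k - tagnat.sig2 r').
Proof.
have -> : Zpow_e z hn k = castmx (hn, erefl) (iter k (mulmx (Zmat nj z)) (evec F nj)).
  rewrite /Zpow_e; elim: k => [|k IH] //=.
  by rewrite IH castmx_mulmx_sq.
by rewrite castmxE iter_mxdiag mxE /= cast_ord_id Zblk_iter.
Qed.

Lemma sig_zero (m : nat) (nj : 'I_m.+1 -> nat) (hnj : forall j, (0 < nj j)%N)
  (r : 'I_(\sum_(j < m.+1) nj j)) : val r = 0%N ->
  tagnat.sig1 r = ord0 /\ val (tagnat.sig2 r) = 0%N.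
Proof.
move=> r0; have := tagnat.rect r; rewrite r0.
case: (tagnat.sig1 r) (tagnat.sig2 r) => [[|j] hj] s /=.
  move=> h; split; first by apply: val_inj.
  by move: h; rewrite big1 // => i; rewrite ltn0.
rewrite (bigD1 ord0) //= => /esym /eqP; rewrite !addn_eq0 => /andP [/andP [h _] _].
by move: (hnj ord0); rewrite lt0n h.
Qed.

End Zp.


Section Kry.
Variable F : fieldType.

Lemma hasse_dvd (x : F) M : forall Q : {poly F},
  (forall r, (r < M)%N -> Q^`N(r).[x] = 0) -> ('X - x%:P)^+M %| Q.
Proof.
elim: M => [|M IH] Q hQ; first by rewrite expr0 dvd1p.
have : root Q x by rewrite /root -(nderivn0 Q) hQ.
case/factor_theorem => q EQ; rewrite EQ.
rewrite exprSr dvdp_mul ?dvdpp //; apply: IH => r hr.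
have E : (q * 'X)^`N(r.+1) = q^`N(r) + q^`N(r.+1) * 'X.
  by have := nderivnMXaddC r q 0; rewrite polyC0 addr0.
have := hQ r.+1 hr; rewrite EQ.
rewrite mulrBr nderivnB E [q * _%:P]mulrC mul_polyC.
rewrite nderivnZ !hornerE.
by rewrite [x * _]mulrC addrK.
Qed.

End Kry.

Section Kry2.
Variable F : fieldType.

Lemma prod_dvd m (z : 'I_m.+1 -> F) (hz : injective z) (nj : 'I_m.+1 -> nat)
  (Q : {poly F}) :
  (forall j, ('X - (z j)%:P)^+(nj j) %| Q) ->
  \prod_j ('X - (z j)%:P)^+(nj j) %| Q.
Proof.
move=> H.
suff: forall s : seq 'I_m.+1, uniq s -> \prod_(j <- s) ('X - (z j)%:P)^+(nj j) %| Q.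
  by apply; apply: index_enum_uniq.
elim=> [|j s IH] /=; first by rewrite big_nil dvd1p.
case/andP => js us; rewrite big_cons Gauss_dvdp ?H ?IH //.
apply: coprimep_expl; rewrite coprimep_sym coprimep_XsubC.
rewrite /root horner_prod prodf_seq_neq0; apply/allP => j' j's /=.
rewrite horner_exp !hornerE expf_neq0 // subr_eq0.
by apply/eqP => /hz ej; move: js; rewrite ej j's.
Qed.

End Kry2.


Section Kry3.
Variable F : fieldType.

Lemma krylov (m n : nat) (nj : 'I_m.+1 -> nat) (z : 'I_m.+1 -> F)
  (hnj : forall j, (0 < nj j)%N)
  (hn : (\sum_(j < m.+1) nj j)%N = n.+1)
  (hz0 : z ord0 = 0) (hzinj : injective z) (k : nat) (hk : (k <= n)%N)
  (y : nat -> F) :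
  (forall a : 'I_n, \sum_(b < k) Zpow_e z hn b.+1 (inord a.+1) 0 * y b = 0) ->
  forall b, (b < k)%N -> y b = 0.
Proof.
move=> H.
set Q := \poly_(i < k) y i * 'X.
have HQ : forall j (r : 'I_(nj j)), Q^`N(r).[z j] = 0.
  move=> j r; pose r' := @tagnat.Rank m.+1 nj j r.
  have Hsig : tagnat.sig r' = Tagged (fun j => 'I_(nj j)) r by apply: tagnat.rankK.
  case: (posnP (val r')) => [r0 | rpos].
    have [s1 s2] := sig_zero hnj r0.
    move: s1 s2; rewrite /tagnat.sig1 /tagnat.sig2 Hsig /= => s1 s2.
    by rewrite s2 nderivn0 hornerMX s1 hz0 mulr0.
  have hr' : (val r' < n.+1)%N by rewrite -hn; exact: ltn_ord.
  have ha : ((val r').-1 < n)%N.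
    by rewrite -ltnS prednK.
  have := H (Ordinal ha).
  have Hz : forall b, Zpow_e z hn b.+1 (inord (Ordinal ha).+1) 0 =
      'C(b.+1, r)%:R * z j ^+ (b.+1 - r).
    move=> b; rewrite Zpow_eE /=.
    have -> : cast_ord (esym hn) (inord (val r').-1.+1) = r'.
      apply: val_inj; rewrite /= prednK // inordK //.
    by rewrite /tagnat.sig1 /tagnat.sig2 Hsig.
  rewrite (eq_bigr (fun b : 'I_k => 'C(b.+1, r)%:R * z j ^+ (b.+1 - r) * y b)); last by move=> b _; rewrite Hz.
  move=> <-.
  rewrite /Q poly_def mulr_suml linear_sum horner_sum.
  apply: eq_bigr => b _.
  rewrite -scalerAl -exprSr linearZ /= nderivnXn hornerZ hornerMn hornerXn.
  by rewrite mulrC mulr_natl.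
have Hdvd := prod_dvd hzinj (fun j => hasse_dvd (fun r hr => HQ j (Ordinal hr))).
have Q0 : Q = 0.
  apply/eqP; apply: contraTT Hdvd => hQ0; apply/negP => hd.
  have := dvdp_leq hQ0 hd.
  rewrite size_prod; last by move=> j _; rewrite expf_neq0 // polyXsubC_eq0.
  under eq_bigr do rewrite size_exp_XsubC.
  under eq_bigr do rewrite -addn1.
  rewrite big_split /= sum1_card hn -addSn addnK.
  apply/negP; rewrite -ltnNge.
  apply: (leq_ltn_trans (size_mul_leq _ _)).
  rewrite size_polyX addn2 /=.
  by rewrite !ltnS (leq_trans (size_poly _ _)) .
move=> b hb.
have := congr1 (fun p : {poly F} => p`_b.+1) Q0.
by rewrite /Q coefMX /= coef_poly hb coef0.
Qed.

End Kry3.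


Lemma sum1_lt (l j : nat) : (j <= l)%N -> (\sum_(i < l | (i < j)%N) 1)%N = j.
Proof.
move=> hj; rewrite -(big_mkord (fun i => i < j)%N (fun _ => 1%N)).
rewrite -[in RHS](subn0 j) -[in RHS](muln1 (j - 0)%N) -sum_nat_const_nat.
by rewrite (big_nat_widen 0 j l) //.
Qed.

Lemma sig1_ones (l : nat) (q : 'I_(\sum_(i < l) 1)) :
  (tagnat.sig1 q : nat) = q.
Proof.
rewrite [in RHS](tagnat.rect q).
case: (tagnat.sig2 q) => [[|x] hx] //=.
by rewrite addn0 sum1_lt // ltnW.
Qed.

Section PE.
Variable F : fieldType.

Lemma tens1_mul (p p' : nat) (l : nat) (X : 'M[F]_(p, 1)) (N : 'M[F]_(1 * l, p'))
  (a : 'I_p) (s : 'I_l) (c : 'I_p') :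
  ((X *t (1%:M : 'M[F]_l)) *m N) (mxtens_index (a, s)) c =
  X a 0 * N (mxtens_index ((0 : 'I_1), s)) c.
Proof.
rewrite mxE.
rewrite (bigD1 (mxtens_index ((0 : 'I_1), s))) //= big1 ?addr0.
  by rewrite mxE !mxtens_indexK /= mxE eqxx mulr1.
move=> q; case: (mxtens_indexP q) => q1 q2; rewrite ord1 => hq.
rewrite mxE !mxtens_indexK /= mxE.
case: eqP => [e|]; last by rewrite mulr0 mul0r.
by move: hq; rewrite e eqxx.
Qed.
End PE.

Section NE.
Variable F : fieldType.

Lemma Nk_entry (l n : nat) (ts : 'I_l -> nat) (ht : (\sum_(i < l) ts i)%N = (n * l)%N)
  (k : nat) (s : 'I_l) (c : 'I_(l * n)) :
  Nk F ht k (mxtens_index ((0 : 'I_1), s)) c =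
  let c' := cast_ord (esym (etrans ht (mulnC n l))) c in
  (s == tagnat.sig1 c')%:R * ((tagnat.sig2 c').+1 == k)%:R.
Proof.
rewrite /Nk castmxE mxE /=.
set q' := cast_ord (esym (sum1_ord l)) _.
set c' := cast_ord _ c.
have hq : tagnat.sig1 q' = s.
  by apply: val_inj; rewrite /= sig1_ones /= mul0n add0n.
rewrite {1}hq; case: eqP => [e|ne].
  by rewrite mxE mul1r.
by rewrite mxE mul0r.
Qed.
End NE.

Section PE2.
Variable F : fieldType.

Lemma P_entry (m n l t : nat) (nj : 'I_m.+1 -> nat) (z : 'I_m.+1 -> F)
  (hn : (\sum_(j < m.+1) nj j)%N = n.+1) (ts : 'I_l -> nat)
  (ht : (\sum_(i < l) ts i)%N = (n * l)%N)
  (a : 'I_n.+1) (s : 'I_l) (c : 'I_(l * n)) :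
  (Vmat l t z hn *m Nmat F t ht) (mxtens_index (a, s)) c =
  let c' := cast_ord (esym (etrans ht (mulnC n l))) c in
  (s == tagnat.sig1 c')%:R *
  (if (tagnat.sig2 c' < t)%N then Zpow_e z hn (tagnat.sig2 c').+1 a 0 else 0).
Proof.
rewrite /Vmat /Nmat mul_mxrow_mxcol summxE /=.
under eq_bigr => k _ do rewrite tens1_mul Nk_entry /=.
set c' := cast_ord _ c.
case: eqP => [e|ne]; last first.
  by rewrite mul0r big1 // => k _; rewrite mul0r mulr0.
rewrite mul1r.
under eq_bigr => k _ do rewrite mul1r eqSS mulrC.
case: ltnP => h.
  by rewrite (sum_delta (fun k => Zpow_e z hn k.+1 a 0)).
rewrite big1 // => k _; case: eqP => [e'|]; last by rewrite mul0r.
by move: h; rewrite e' leqNgt ltn_ord.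
Qed.
End PE2.


Section LE.
Variable F : fieldType.
Variables (m n l t : nat) (nj : 'I_m.+1 -> nat) (z : 'I_m.+1 -> F)
  (hn : (\sum_(j < m.+1) nj j)%N = n.+1) (ts : 'I_l -> nat)
  (ht : (\sum_(i < l) ts i)%N = (n * l)%N).

Lemma VN_entry (r : 'I_(l + l * n)) (c : 'I_(l * n)) :
  VN t z hn ht r c =
  let idx := cast_ord (esym (rows_split n l)) r in
  let c' := cast_ord (esym (etrans ht (mulnC n l))) c in
  ((mxtens_unindex idx).2 == tagnat.sig1 c')%:R *
  (if (tagnat.sig2 c' < t)%N then Zpow_e z hn (tagnat.sig2 c').+1 (mxtens_unindex idx).1 0 else 0).
Proof.
rewrite /VN castmxE /= cast_ord_id.
set idx := cast_ord _ r.
by rewrite -{1}[idx]mxtens_unindexK P_entry.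
Qed.

Lemma usub_VN (hnj : forall j, (0 < nj j)%N) (hz0 : z ord0 = 0) :
  usubmx (VN t z hn ht) = 0.
Proof.
apply/matrixP => r c; rewrite !mxE VN_entry; cbv zeta.
case: ifP => _; last by rewrite mulr0.
rewrite Zpow_eE; cbv zeta.
set r' := cast_ord (esym hn) _.
have r0 : val r' = 0%N.
  by rewrite /= divn_small.
have [s1 s2] := sig_zero hnj r0.
by rewrite s2 s1 hz0 subn0 expr0n /= mulr0 mulr0.
Qed.

End LE.

Section LE2.
Variable F : fieldType.
Variables (m n l t : nat) (nj : 'I_m.+1 -> nat) (z : 'I_m.+1 -> F)
  (hn : (\sum_(j < m.+1) nj j)%N = n.+1) (ts : 'I_l -> nat)
  (ht : (\sum_(i < l) ts i)%N = (n * l)%N).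
Hypothesis hl : (0 < l)%N.

Lemma rdiv_lt (r : 'I_(l * n)) : (r %/ l < n)%N.
Proof. by rewrite ltn_divLR // [(n * l)%N]mulnC. Qed.

Lemma L_entry (r : 'I_(l * n)) (c : 'I_(l * n)) :
  dsubmx (VN t z hn ht) r c =
  ((r %% l)%N == tagnat.sig1 (cast_ord (esym (etrans ht (mulnC n l))) c) :> nat)%:R *
  (if (tagnat.sig2 (cast_ord (esym (etrans ht (mulnC n l))) c) < t)%N
   then Zpow_e z hn (tagnat.sig2 (cast_ord (esym (etrans ht (mulnC n l))) c)).+1
          (inord (r %/ l).+1) 0 else 0).
Proof.
rewrite mxE VN_entry; cbv zeta.
have -> : (mxtens_unindex (cast_ord (esym (rows_split n l)) (rshift l r))).1
   = inord (r %/ l).+1.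
  apply: val_inj; rewrite /= inordK; last by rewrite ltnS rdiv_lt.
  by rewrite divnDl ?dvdnn // divnn hl.
set o := (X in ((X == _)%:R * _ = _)).
have ho : val o = (r %% l)%N by rewrite /= modnDl.
by rewrite -ho.
Qed.

End LE2.

Section SumE.
Variable F : fieldType.
Lemma sum_cast_sig (l n : nat) (ts : 'I_l -> nat) (E : (\sum_(i < l) ts i)%N = (l * n)%N)
  (G : 'I_(l * n) -> F) :
  \sum_(c < l * n) G c = \sum_(i < l) \sum_(b : 'I_(ts i)) G (cast_ord E (tagnat.Rank i b)).
Proof.
rewrite (reindex (cast_ord E)) /=; last first.
  by exists (cast_ord (esym E)) => x _; rewrite ?cast_ordK ?cast_ordKV.
rewrite sig_big_dep /=.
rewrite (reindex _ tagnat.sig_bij_on) /=.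
by apply: eq_bigr => c _; rewrite -tagnat.rankE tagnat.sigK.
Qed.
End SumE.

Section LX.
Variable F : fieldType.
Variables (m n l t : nat) (nj : 'I_m.+1 -> nat) (z : 'I_m.+1 -> F)
  (hn : (\sum_(j < m.+1) nj j)%N = n.+1) (ts : 'I_l -> nat)
  (ht : (\sum_(i < l) ts i)%N = (n * l)%N).
Hypothesis hl : (0 < l)%N.

Lemma Lx_entry (x : 'cV[F]_(l * n)) (r : 'I_(l * n)) :
  (dsubmx (VN t z hn ht) *m x) r 0 =
  \sum_(i < l) ((r %% l)%N == i :> nat)%:R *
    \sum_(b : 'I_(ts i)) (if (b < t)%N then Zpow_e z hn b.+1 (inord (r %/ l).+1) 0 else 0)
       * x (cast_ord (etrans ht (mulnC n l)) (tagnat.Rank i b)) 0.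
Proof.
rewrite mxE (sum_cast_sig (etrans ht (mulnC n l))).
apply: eq_bigr => i _; rewrite mulr_sumr; apply: eq_bigr => b _.
rewrite (@L_entry F m n l t nj z hn ts ht hl) cast_ordK.
by rewrite /tagnat.sig1 /tagnat.sig2 /tagnat.Rank tagnat.rankK /= mulrA.
Qed.
End LX.


Arguments Zpow_e : simpl never.

Section Main.
Variable F : fieldType.

Theorem gen (l m n : nat) (nj : 'I_m.+1 -> nat)
  (z : 'I_m.+1 -> F) (ts : 'I_l -> nat)
  (hl : (1 <= l)%N)
  (hnj : forall j, (0 < nj j)%N)
  (hn : (\sum_(j < m.+1) nj j)%N = n.+1)
  (hz0 : z ord0 = 0)
  (hzinj : injective z)
  (hts : forall i, (0 < ts i)%N)
  (ht : (\sum_(i < l) ts i)%N = (n * l)%N) :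
  let t := (\max_(i < l) ts i)%N in
  usubmx (VN t z hn ht) = 0 /\
  (dsubmx (VN t z hn ht) \in unitmx <-> forall i, ts i = n).
Proof.
move=> t; split; first exact: usub_VN.
have tsle : forall i, (ts i <= t)%N by move=> i; apply: leq_bigmax.
set E := etrans ht (mulnC n l).
have Lx : forall (x : 'cV[F]_(l * n)) (r : 'I_(l * n)),
  (dsubmx (VN t z hn ht) *m x) r 0 =
  \sum_(i < l) ((r %% l)%N == i :> nat)%:R *
    \sum_(b : 'I_(ts i)) Zpow_e z hn b.+1 (inord (r %/ l).+1) 0
       * x (cast_ord E (tagnat.Rank i b)) 0.
  move=> x r; rewrite (@Lx_entry F m n l t nj z hn ts ht hl).
  apply: eq_bigr => i _; congr (_ * _); apply: eq_bigr => b _.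
  by rewrite (leq_trans (ltn_ord b) (tsle i)).
set L := dsubmx _.
have sigRank : forall i (b : 'I_(ts i)),
  tagnat.sig1 (tagnat.Rank i b) = i /\ tagnat.sig2 (tagnat.Rank i b) = b :> nat.
  by move=> i b; rewrite /tagnat.sig1 /tagnat.sig2 /tagnat.Rank tagnat.rankK.
split.
- move=> Lu.
  case: (boolP [exists i, (n < ts i)%N]) => [/existsP [i1 hi1] | /existsPn hall].
  + exfalso.
    pose W := \matrix_(b < ts i1, a < n) Zpow_e z hn b.+1 (inord a.+1) 0.
    have nfree : ~~ row_free W.
      rewrite /row_free; apply/negP => /eqP hW.
      by move: (rank_leq_col W); rewrite hW leqNgt hi1.
    have : kermx W != 0 by rewrite kermx_eq0.
    case/rowV0Pn => v /sub_kermxP vW vn0.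
    pose b0 : 'I_(ts i1) := Ordinal (hts i1).
    pose x : 'cV[F]_(l * n) := \col_c (if tagnat.sig1 (cast_ord (esym E) c) == i1
       then v 0 (insubd b0 (nat_of_ord (tagnat.sig2 (cast_ord (esym E) c)))) else 0).
    have xE : forall i (b : 'I_(ts i)), x (cast_ord E (tagnat.Rank i b)) 0 =
        if i == i1 then v 0 (insubd b0 (nat_of_ord b)) else 0.
      move=> i b; rewrite mxE cast_ordK.
      by rewrite (proj2 (sigRank i b)) (proj1 (sigRank i b)).
    have Lx0 : L *m x = 0.
      apply/matrixP => r j; rewrite ord1 Lx [RHS]mxE.
      rewrite (bigD1 i1) //= [X in _ + X]big1 ?addr0; last first.
        move=> i hi; rewrite big1 ?mulr0 // => b _.
        by rewrite xE (negbTE hi) mulr0.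
      have h := congr1 (fun M : 'M[F]_(1, n) => M 0 (Ordinal (rdiv_lt hl r))) vW.
      rewrite /= [in RHS]mxE mxE in h.
      rewrite [X in _ * X](_ : _ = 0) ?mulr0 //.
      rewrite -[RHS]h; apply: eq_bigr => b _.
      rewrite xE eqxx (_ : insubd b0 b = b); last exact: valKd.
      by rewrite mulrC [W _ _]mxE.
    have x0 : x = 0 by rewrite -(mulKmx Lu x) Lx0 mulmx0.
    case/rV0Pn: vn0 => b hb.
    have := xE i1 b; rewrite x0 mxE eqxx valKd => h.
    by rewrite -h eqxx in hb.
  + have hle : forall i, (ts i <= n)%N by move=> i; rewrite leqNgt hall.
    move=> i; apply/eqP; rewrite eqn_leq hle /=.
    have e : (\sum_(i < l) ts i + \sum_(i < l) (n - ts i))%N = (n * l)%N.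
      rewrite -big_split /=.
      under eq_bigr => j _ do rewrite subnKC ?hle //.
      by rewrite sum_nat_const card_ord mulnC.
    have hs : (\sum_(i < l) (n - ts i))%N = 0%N.
      by move: e; rewrite ht -{2}[(n * l)%N]addn0 => /eqP; rewrite eqn_add2l => /eqP.
    have := sum_nat_eq0 xpredT (fun i => n - ts i)%N.
    rewrite hs eqxx => /esym /forallP /(_ i) /=.
    by rewrite subn_eq0.
- move=> hall.
  rewrite -unitmx_tr -row_free_unit; apply: inj_row_free => v hv.
  have Lx0 : L *m v^T = 0 by rewrite -[L]trmxK -trmx_mul hv trmx0.
  suff x0 : v^T = 0 by rewrite -[v]trmxK x0 trmx0.
  apply/matrixP => c j; rewrite ord1 [RHS]mxE.
  set c' := cast_ord (esym E) c.
  have hc : c = cast_ord E (tagnat.Rank (tagnat.sig1 c') (tagnat.sig2 c')).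
    by rewrite tagnat.sig2K cast_ordKV.
  rewrite hc; clear hc; move: (tagnat.sig2 c'); move: (tagnat.sig1 c') => i b.
  pose b0 : 'I_(ts i) := Ordinal (hts i).
  pose y := fun k : nat => v^T (cast_ord E (tagnat.Rank i (insubd b0 k))) 0.
  have yE : forall b' : 'I_(ts i), y b' = v^T (cast_ord E (tagnat.Rank i b')) 0.
    by move=> b'; rewrite /y (_ : insubd b0 b' = b') //; exact: valKd.
  rewrite -yE.
  apply: (@krylov F m n nj z hnj hn hz0 hzinj (ts i) _ y); last exact: ltn_ord.
    by rewrite hall.
  move=> a.
  have hr : (a * l + i < l * n)%N.
    have h1 : (a * l + i < a.+1 * l)%N by rewrite mulSn [(l + _)%N]addnC ltn_add2l.
    by apply: (leq_trans h1); rewrite mulnC leq_mul2l ltn_ord orbT.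
  have := congr1 (fun M : 'M[F]_(l * n, 1) => M (Ordinal hr) 0) Lx0.
  rewrite /= Lx [RHS]mxE /=.
  have e1 : ((a * l + i) %% l)%N = i by rewrite modnMDl modn_small.
  have e2 : ((a * l + i) %/ l)%N = a by rewrite divnMDl // divn_small ?addn0.
  rewrite e1 e2 (bigD1 i) //= [X in _ + X]big1 ?addr0; last first.
    by move=> i' hi'; rewrite (_ : (i == i' :> nat) = false) ?mul0r //; apply/negbTE; rewrite eq_sym.
  rewrite eqxx mul1r => h; rewrite -[RHS]h.
  by apply: eq_bigr => b' _; rewrite yE.
Qed.
End Main.


Unset Implicit Arguments.
Local Open Scope complex_scope.

Theorem lemma3 (R : realType) (l m n : nat) (nj : 'I_m.+1 -> nat)
  (z : 'I_m.+1 -> R[i]) (ts : 'I_l -> nat)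
  (hl : (1 <= l)%N)
  (hnj : forall j, (0 < nj j)%N)
  (hn : (\sum_(j < m.+1) nj j)%N = n.+1)
  (hn1 : (1 <= n)%N)
  (hz0 : z ord0 = 0)
  (hzinj : injective z)
  (hzdisc : forall j, `|z j| < 1)
  (hts : forall i, (0 < ts i)%N)
  (ht : (\sum_(i < l) ts i)%N = (n * l)%N) :
  let t := (\max_(i < l) ts i)%N in
  usubmx (VN t z hn ht) = 0 /\
  (dsubmx (VN t z hn ht) \in unitmx <-> forall i, ts i = n).
Proof.
exact: (@gen _ l m n nj z ts hl hnj hn hz0 hzinj hts ht).
Qed.
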